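(* In the shallow setting of the context, assume there exists $M>0$ such that $$\max_{h=1,\ldots,n_2}\Big|\sigma^{(s_h)}\Big(b+\sum_{r=1}^{n_0}w_rx_{\alpha,r}\Big)w_1^{s_h}\Big|\le M\Big(1+\Big|b+\sum_{r=1}^{n_0}w_rx_{\alpha,r}\Big|\Big)$$ for every $\alpha\in A$ and every $b,w_1,\ldots,w_{n_0}\in\mathbb{R}$. Then $\Upsilon(\cdot;\underline{x})$ is finite in a neighborhood of the origin of $\mathbb{R}^{|A|\times n_2}$.
   Context: Fix integers $n_0,n_2\ge1$, constants $C_b\ge0$, $C_W>0$, a function $\sigma:\mathbb{R}\to\mathbb{R}$, a finite set $A$ and inputs $x_\alpha=(x_{\alpha,1},\ldots,x_{\alpha,n_0})\in\mathbb{R}^{n_0}$, $\alpha\in A$ ($\underline{x}=\{x_\alpha\}$). Fix $s_1,\ldots,s_{n_2}\in\{0,1\}$; unless all $s_h=0$, $\sigma$ is assumed almost everywhere differentiable with a.e. derivative $\sigma^{(1)}=\sigma'$; $\sigma^{(0)}=\sigma$. Let $b^{(1)}_1$ be centered Normal with variance $C_b$, $W^{(1)}_{1r}$ ($r=1,\ldots,n_0$) centered Normal with variance $C_W/n_0$, and $\widehat W^{(2)}_{h1}$ ($h=1,\ldots,n_2$) standard Normal, all independent. Set $F_{h1}(x):=\sqrt{C_W}\widehat W^{(2)}_{h1}\sigma^{(s_h)}(b^{(1)}_1+\sum_{r=1}^{n_0}W^{(1)}_{1r}x_r)(W^{(1)}_{11})^{s_h}$ and, for $\theta\in\mathbb{R}^{|A|\times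 n_2}$, $\Upsilon(\theta;\underline{x}):=\log\mathbb{E}[\exp(\sum_{\alpha\in A}\sum_{h=1}^{n_2}\theta_{\alpha h}F_{h1}(x_\alpha))]$, which equals $\log\mathbb{E}[\exp(\frac{C_W}{2}\sum_{h=1}^{n_2}(\sum_{\alpha\in A}\theta_{\alpha h}\sigma^{(s_h)}(b^{(1)}_1+\sum_rW^{(1)}_{1r}x_{\alpha,r})(W^{(1)}_{11})^{s_h})^2)]$. *)

(* Defs.v *)
From HB Require Import structures.
From mathcomp Require Import all_boot all_order all_algebra.
From mathcomp Require Import all_classical all_reals all_analysis.
Set Implicit Arguments. Unset Strict Implicit. Unset Printing Implicit Defensive.
Import Order.TTheory GRing.Theory Num.Theory.
Import numFieldNormedType.Exports.
Local Open Scope classical_set_scope.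
Local Open Scope ring_scope.

(* Mutual independence of a finite family of real random variables:
   product rule for all families of Borel sets (taking B i = setT for the
   indices not involved gives the product rule for every subfamily). *)
Definition mutually_independent {d} {T : measurableType d} {R : realType}
  (P : probability T R) (I : finType) (X : I -> T -> R) : Prop :=
  forall B : I -> set R, (forall i, measurable (B i)) ->
    P [set w | forall i, B i (X i w)] = (\prod_(i : I) P (X i @^-1` B i))%E.

(* X is a centered Normal random variable with variance v >= 0;
   variance 0 means X = 0 almost surely (law = Dirac at 0). *)
Definition centered_normal_rv {d} {T : measurableType d} {R : realType}
  (P : probability T R) (X : T -> R) (v : R) : Prop :=
  measurable_fun setT X /\
  forall A : set R, measurable A ->
    P (X @^-1` A) = (if v == 0 then \d_(0 : R) A else normal_prob 0 (Num.sqrt v) A).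

(* sigma^{(0)} = sigma, sigma^{(1)} = sigma' *)
Definition sigma_s {R : realType} (sigma sigma' : R -> R) (s : bool) : R -> R :=
  if s then sigma' else sigma.

Definition elog {R : realType} (x : \bar R) : \bar R :=
  match x with
  | r%:E => if 0 < r then (ln r)%:E else -oo%E
  | +oo%E => +oo%E
  | -oo%E => -oo%E
  end.

(* first-layer pre-activation  b + sum_r w_r x_r ; index set {1..n0} is 'I_n0.+1 *)
Definition preact {R : realType} (n0 : nat) (b : R) (w : 'I_n0.+1 -> R)
  (x : 'I_n0.+1 -> R) : R := b + \sum_(r < n0.+1) w r * x r.

Definition F_h1 {R : realType} (n0 : nat) (CW : R) (sigma sigma' : R -> R)
  (s : bool) (Wh : R) (b : R) (w : 'I_n0.+1 -> R) (x : 'I_n0.+1 -> R) : R :=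
  Num.sqrt CW * Wh * sigma_s sigma sigma' s (preact b w x) * (w ord0) ^+ s.

Definition Upsilon {d} {T : measurableType d} {R : realType} (P : probability T R)
  (n0 n2 : nat) (CW : R) (sigma sigma' : R -> R) (s : 'I_n2 -> bool)
  (A : finType) (x : A -> 'I_n0.+1 -> R)
  (b : T -> R) (W : 'I_n0.+1 -> T -> R) (Wh : 'I_n2 -> T -> R)
  (theta : A -> 'I_n2 -> R) : \bar R :=
  elog ('E_P[fun w => expR (\sum_(a : A) \sum_(h < n2)
          theta a h * F_h1 CW sigma sigma' (s h) (Wh h w) (b w)
                        (fun r => W r w) (x a))])%E.

Definition all_params {T : Type} {R : realType} (n0 n2 : nat) (b : T -> R)
  (W : 'I_n0.+1 -> T -> R) (Wh : 'I_n2 -> T -> R)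
  : option ('I_n0.+1 + 'I_n2) -> T -> R :=
  fun i => match i with
           | None => b
           | Some (inl r) => W r
           | Some (inr h) => Wh h
           end.

(* Main.v *)
Require Import Defs.
From HB Require Import structures.
From mathcomp Require Import all_boot all_order all_algebra.
From mathcomp Require Import all_classical all_reals all_analysis.
From mathcomp Require Import measurable_realfun normal_distribution.
From mathcomp Require Import ring lra.
Import Order.TTheory GRing.Theory Num.Theory.
Import numFieldNormedType.Exports.
Local Open Scope classical_set_scope.
Local Open Scope ring_scope.

Section density.
Context d (T : measurableType d) (R : realType).
Variables (mu nu : {measure set T -> \bar R}) (g : T -> R).
Hypothesis g0 : forall x, 0 <= g x.
Hypothesis mg : measurable_fun setT g.
Hypothesis hnu : forall A, measurable A -> nu A = (\int[mu]_(x in A) (g x)%:E)%E.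
Import HBNNSimple.
Local Open Scope ereal_scope.

Lemma density_integral (f : T -> \bar R) : (forall x, 0 <= f x) ->
  measurable_fun setT f ->
  \int[nu]_x f x = \int[mu]_x (f x * (g x)%:E).
Proof.
move=> f0 mf; set E := @setT T; have mE : measurable E := measurableT.
pose h := nnsfun_approx mE mf.
have mgE : measurable_fun E (EFin \o g) by apply/measurable_EFinP.
have -> : \int[nu]_(x in E) f x =
    lim (\int[nu]_(x in E) (EFin \o h n) x @[n --> \oo]).
  have fE x : E x -> f x = lim ((EFin \o h n) x @[n --> \oo]).
    by move=> Ex; apply/esym/cvg_lim => //; exact: cvg_nnsfun_approx.
  under eq_integral => x /[!inE] /fE -> //.
  apply: monotone_convergence => //.
  - move=> n; apply/measurable_EFinP.
    by apply: (measurable_funS measurableT) => //; exact/measurable_funP.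
  - by move=> n x Ex //=; rewrite lee_fin.
  - by move=> x Ex a b ab; rewrite lee_fin; exact/lefP/nd_nnsfun_approx.
have -> : \int[mu]_(x in E) (f x * (g x)%:E) =
    lim (\int[mu]_(x in E) ((EFin \o h n) x * (g x)%:E) @[n --> \oo]).
  have fg x : E x -> f x * (g x)%:E = lim (((EFin \o h n) x * (g x)%:E) @[n --> \oo]).
    by move=> Ex; apply/esym/cvg_lim => //; apply: cvgeZr => //;
      exact: cvg_nnsfun_approx.
  under eq_integral => x /[!inE] /fg -> //.
  apply: monotone_convergence => [//| | |].
  - move=> n; apply/emeasurable_funM => //; apply/measurable_funTS.
    exact/measurable_EFinP.
  - by move=> n x Ex /=; rewrite mule_ge0 ?lee_fin.
  - by move=> x Ex a b ab/=; rewrite lee_wpmul2r ?lee_fin//; exact/lefP/nd_nnsfun_approx.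
suff suf n : \int[mu]_(x in E) ((EFin \o h n) x * (g x)%:E) =
    \int[nu]_(x in E) (EFin \o h n) x.
  by rewrite (funext suf).
transitivity (\int[nu]_(x in E)
   (\sum_(y \in range (h n)) (y * \1_(h n @^-1` [set y]) x)%:E)); last first.
  by apply: eq_integral => t tE; rewrite /= fimfunE -fsumEFin.
have indich m r : measurable_fun E (fun x => (r * \1_(h m @^-1` [set r]) x)%:E).
  by apply: (measurable_comp measurableT) => //; exact: measurable_funM.
rewrite ge0_integral_fsum//; last by move=> m y Ey; exact: nnfun_muleindic_ge0.
transitivity (\int[mu]_(x in E) (\sum_(y \in range (h n))
    (y * \1_(h n @^-1` [set y]) x)%:E * (g x)%:E)).
  under [RHS]eq_integral => x xE.
    rewrite -ge0_mule_fsuml => [|y]; last exact: nnfun_muleindic_ge0.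
    rewrite fsumEFin // -(fimfunE _ x); over.
  by [].
rewrite ge0_integral_fsum//; last 2 first.
  - move=> y; apply: emeasurable_funM => //.
  - by move=> m y Ey; rewrite mule_ge0 ?lee_fin //; rewrite -lee_fin EFinM; exact: nnfun_muleindic_ge0.
apply: eq_fsbigr => r rhn.
under [RHS]eq_integral do rewrite EFinM.
rewrite integralZl_indic_nnsfun => //.
under eq_integral do rewrite EFinM -muleA.
rewrite ge0_integralZl//.
- under eq_integral do rewrite muleC.
  rewrite (eq_integral ((EFin \o g) \_ (h n @^-1` [set r]))); last first.
    by move=> x xE; rewrite epatch_indic.
  by rewrite -integral_mkcondr -hnu// integral_indic// setIC.
- apply: emeasurable_funM => //; exact/measurable_EFinP.
- by move=> t Et; rewrite mule_ge0 ?lee_fin.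
- by move: rhn; rewrite inE => -[t _ <-]; rewrite lee_fin.
Qed.
End density.

Lemma gauss_pt (R : realType) (v s y : R) : 0 < v -> 0 <= s -> s * v <= 4^-1 ->
  expR (s * y ^+ 2) * normal_pdf 0 (Num.sqrt v) y <=
  normal_peak (Num.sqrt v) / normal_peak (Num.sqrt (v * 2)) *
    normal_pdf 0 (Num.sqrt (v * 2)) y.
Proof.
move=> v0 s0 sv.
have v20 : 0 < v * 2 by rewrite mulr_gt0.
have sn : Num.sqrt v != 0 by rewrite gt_eqF // sqrtr_gt0.
have sn2 : Num.sqrt (v * 2) != 0 by rewrite gt_eqF // sqrtr_gt0.
rewrite /normal_pdf (negbTE sn) (negbTE sn2) /normal_fun.
rewrite mulrA divfK; last by rewrite gt_eqF // normal_peak_gt0.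
rewrite mulrCA; apply: ler_wpM2l; first exact: normal_peak_ge0.
rewrite -expRD ler_expR.
rewrite !sqr_sqrtr ?(ltW v0) ?(ltW v20) // subr0.
set t := y ^+ 2.
have t0 : 0 <= t by rewrite /t sqr_ge0.
have h1 : s * t <= t / (v * 4).
  rewrite ler_pdivlMr ?mulr_gt0 //.
  have -> : s * t * (v * 4) = (4 * (s * v)) * t by ring.
  rewrite -[leRHS]mul1r ler_wpM2r //.
  have : 4 * (s * v) <= 4 * 4^-1 by rewrite ler_wpM2l.
  by rewrite divff.
have -> : - t / ((v * 2) *+ 2) = - t / (v *+ 2) + t / (v * 4).
  by field; rewrite gt_eqF.
by rewrite addrC lerD2l.
Qed.

Lemma mexpsq (R : realType) (s : R) :
  measurable_fun setT (fun y : R => expR (s * y ^+ 2)).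
Proof.
by apply: measurableT_comp => //; apply: measurable_funM => //.
Qed.

Lemma gauss_moment (R : realType) d (T : measurableType d) (P : probability T R)
  (Y : T -> R) (v s : R) : centered_normal_rv P Y v -> 0 <= v -> 0 <= s ->
  s * v <= 4^-1 ->
  (\int[P]_w (expR (s * Y w ^+ 2))%:E < +oo)%E.
Proof.
move=> [mY hY] v0 s0 sv.
pose Y' : T -> measurableTypeR R := Y.
have mY' : measurable_fun setT Y' := mY.
have hY' : forall A : set (measurableTypeR R), measurable A ->
    P (Y' @^-1` A) = (if v == 0 then \d_(0 : R) A else normal_prob 0 (Num.sqrt v) A).
  by move=> A mA; exact: (hY A mA).
have mf : measurable_fun setT (fun y : measurableTypeR R => (expR (s * y ^+ 2))%:E).
  by apply/measurable_EFinP; exact: mexpsq.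
have <- : (\int[pushforward P Y']_y (expR (s * y ^+ 2))%:E =
    \int[P]_w (expR (s * Y w ^+ 2))%:E)%E.
  by rewrite (ge0_integral_pushforward mY') //.
have [v00|vn0] := eqVneq v 0.
  rewrite (eq_measure_integral (\d_(0 : measurableTypeR R))); last first.
    by move=> A mA _; transitivity (P (Y' @^-1` A)) => //; rewrite hY' // v00 eqxx.
  by rewrite integral_dirac // diracE in_setT mul1e ltry.
have vp : 0 < v by rewrite lt_def vn0 v0.
rewrite (eq_measure_integral (normal_prob 0 (Num.sqrt v))); last first.
  by move=> A mA _; transitivity (P (Y' @^-1` A)) => //; rewrite hY' // (negbTE vn0).
rewrite (@density_integral _ _ _ lebesgue_measure _ (normal_pdf 0 (Num.sqrt v))) //.
all: try (by move=> y; rewrite lee_fin expR_ge0).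
all: try (exact: normal_pdf_ge0).
all: try (exact: measurable_normal_pdf).
apply: (@le_lt_trans _ _ (\int[lebesgue_measure]_y
   ((normal_peak (Num.sqrt v) / normal_peak (Num.sqrt (v * 2)))%:E *
    (normal_pdf 0 (Num.sqrt (v * 2)) y)%:E))%E).
  apply: ge0_le_integral => //.
  - by move=> y _; rewrite -EFinM lee_fin mulr_ge0 ?expR_ge0 ?normal_pdf_ge0.
  - apply/measurable_EFinP; apply: measurable_funM; first exact: mexpsq.
    exact: measurable_normal_pdf.
  - apply/measurable_EFinP; apply: measurable_funM => //.
    exact: measurable_normal_pdf.
  - by move=> y _; rewrite -!EFinM lee_fin gauss_pt.
rewrite ge0_integralZl //.
- by rewrite integral_normal_pdf mule1 ltry.
- by apply/measurable_EFinP; exact: measurable_normal_pdf.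
- by move=> y _; rewrite lee_fin normal_pdf_ge0.
- by rewrite lee_fin divr_ge0 ?normal_peak_ge0.
Qed.

Lemma argmax_ex (R : realDomainType) (J : finType) (j0 : J) (G : J -> R) :
  exists k, forall j, G j <= G k.
Proof.
case: (@arg_maxP _ R J j0 xpredT G isT) => k _ H.
by exists k => j; exact: H.
Qed.

Lemma sum_le_card_max (R : realDomainType) (J : finType) (G : J -> R) k :
  (forall j, G j <= G k) -> \sum_j G j <= #|J|%:R * G k.
Proof.
move=> Hk; apply: (le_trans (ler_sum _ (fun j _ => Hk j))).
by rewrite sumr_const mulr_natl.
Qed.

Lemma single_le_sum (R : realDomainType) (J : finType) (G : J -> R) k :
  (forall j, 0 <= G j) -> G k <= \sum_j G j.
Proof.
move=> G0; rewrite (bigD1 k) //= lerDl; apply: sumr_ge0 => j _; exact: G0.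
Qed.

Lemma L_sq (R : realDomainType) (J : finType) (F : J -> R) :
  (forall j, 0 <= F j) ->
  (\sum_j F j) ^+ 2 <= (#|J|%:R) ^+ 2 * \sum_j F j ^+ 2.
Proof.
move=> F0.
case: (pickP (@predT J)) => [j0 _|J0].
  have [k Hk] := @argmax_ex _ _ j0 F.
  have h1 := @sum_le_card_max _ _ F _ Hk.
  apply: (@le_trans _ _ ((#|J|%:R * F k) ^+ 2)).
    rewrite ler_sqr ?nnegrE //; first by apply: sumr_ge0 => j _; exact: F0.
    by rewrite mulr_ge0.
  rewrite exprMn ler_wpM2l ?exprn_ge0 //.
  exact: (@single_le_sum _ _ (fun j => F j ^+ 2) _) (fun j => sqr_ge0 _).
have -> : \sum_j F j = 0 by rewrite big_pred0.
by rewrite expr0n /= mulr_ge0 ?exprn_ge0 // sumr_ge0 // => j _; rewrite sqr_ge0.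
Qed.

Lemma L_exp (R : realType) (J : finType) (j0 : J) (G : J -> R) :
  expR (\sum_j G j) <= \sum_j expR (#|J|%:R * G j).
Proof.
have [k Hk] := @argmax_ex _ _ j0 G.
apply: (@le_trans _ _ (expR (#|J|%:R * G k))).
  by rewrite ler_expR; exact: sum_le_card_max.
apply: (@single_le_sum _ _ (fun j => expR (#|J|%:R * G j)) _) => j.
exact: expR_ge0.
Qed.

Lemma ring_aux (R : comRingType) (m e c y : R) :
  m * (e * c * m ^+ 2 * y) = e * (c * m ^+ 3) * y.
Proof. ring. Qed.

Lemma ring_aux2 (R : comRingType) (n2 a sc M X Q e : R) :
  a * (n2 * (e * (sc * M * X) * Q ^+ 2)) = e * (a * n2 * (sc * M * X)) * Q ^+ 2.
Proof. ring. Qed.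

Lemma ring_aux3 (R : comRingType) (sc Q M X : R) :
  sc * Q * (M * (X * Q)) = sc * M * X * Q ^+ 2.
Proof. ring. Qed.

Theorem proposition5p3
  (R : realType) (d : measure_display) (T : measurableType d)
  (P : probability T R)
  (n0 n2 : nat) (Hn2 : (0 < n2)%N)
  (Cb CW : R) (HCb : 0 <= Cb) (HCW : 0 < CW)
  (sigma sigma' : R -> R)
  (Hmsigma : measurable_fun setT sigma) (Hmsigma' : measurable_fun setT sigma')
  (s : 'I_n2 -> bool)
  (Hderiv : (exists h, s h) ->
     {ae (@lebesgue_measure R), forall z : R, is_derive z (1 : R) sigma (sigma' z)})
  (A : finType) (x : A -> 'I_n0.+1 -> R)
  (b : T -> R) (W : 'I_n0.+1 -> T -> R) (Wh : 'I_n2 -> T -> R)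
  (Hb : centered_normal_rv P b Cb)
  (HW : forall r, centered_normal_rv P (W r) (CW / n0.+1%:R))
  (HWh : forall h, centered_normal_rv P (Wh h) 1)
  (Hindep : mutually_independent P (all_params b W Wh))
  (M : R) (HM0 : 0 < M)
  (HM : forall (a : A) (bb : R) (w : 'I_n0.+1 -> R) (h : 'I_n2),
     `| sigma_s sigma sigma' (s h) (preact bb w (x a)) * (w ord0) ^+ (s h) |
       <= M * (1 + `| preact bb w (x a) |)) :
  exists2 eps : R, 0 < eps &
    forall theta : A -> 'I_n2 -> R, (forall a h, `| theta a h | < eps) ->
      Upsilon P CW sigma sigma' s x b W Wh theta \is a fin_num.
Proof.
have [mb _] := Hb.
have mW r : measurable_fun setT (W r) by case: (HW r).
have mWh h : measurable_fun setT (Wh h) by case: (HWh h).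
pose Jt : finType := (('I_1 + 'I_1) + ('I_n0.+1 + 'I_n2))%type.
pose Yv (j : Jt) : T -> R := match j with
  | inl (inl _) => fun _ => 1
  | inl (inr _) => b
  | inr (inl r) => W r
  | inr (inr h) => Wh h end.
pose Qw w := \sum_(j : Jt) `|Yv j w|.
have Qdec w : Qw w = (1 + `|b w|) + (\sum_r `|W r w| + \sum_h `|Wh h w|).
  by rewrite /Qw !big_sumType !big_ord1 /= normr1.
pose X := 1 + \sum_a \sum_(r < n0.+1) `|x a r|.
have X1 : 1 <= X.
  by rewrite /X lerDl; apply: sumr_ge0 => a _; apply: sumr_ge0 => r _.
have xle a r : `|x a r| <= X.
  rewrite /X (le_trans _ (ler_wpDl ler01 (lexx _))) //.
  apply: (le_trans (@single_le_sum _ _ (fun r => `|x a r|) r _)) => //.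
  exact: (@single_le_sum _ _ (fun a => \sum_(r < n0.+1) `|x a r|) a
    (fun a => sumr_ge0 _ (fun r _ => normr_ge0 _))).
pose C0 := #|A|%:R * n2%:R * (Num.sqrt CW * M * X).
pose m := #|Jt|%:R : R.
pose K := C0 * m ^+ 3.
pose V := 1 + Cb + CW.
pose eps := (4 * (K * V + 1))^-1.
have C0ge : 0 <= C0.
  by rewrite /C0 !mulr_ge0 ?sqrtr_ge0 ?(ltW HM0) // (le_trans ler01 X1).
have Kge : 0 <= K by rewrite /K mulr_ge0 // exprn_ge0.
have V0 : 0 < V by rewrite /V; lra.
have eps0 : 0 < eps.
  by rewrite /eps invr_gt0 mulr_gt0 // ltr_wpDl // mulr_ge0 // ltW.
exists eps => // theta Htheta.
rewrite /Upsilon unlock.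
set I := (X in elog X).
pose Ew w := \sum_(a : A) \sum_(h < n2)
          theta a h * F_h1 CW sigma sigma' (s h) (Wh h w) (b w)
                        (fun r => W r w) (x a).
have EI : I = (\int[P]_w (expR (Ew w))%:E)%E by [].
have term w a h : theta a h * F_h1 CW sigma sigma' (s h) (Wh h w) (b w)
                        (fun r => W r w) (x a) <=
    eps * (Num.sqrt CW * M * X) * Qw w ^+ 2.
  set pre := preact (b w) (fun r => W r w) (x a).
  have h1 : `|sigma_s sigma sigma' (s h) pre * W ord0 w ^+ s h| <= M * (1 + `|pre|).
    exact: (HM a (b w) (fun r => W r w) h).
  have hp : `|pre| <= `|b w| + X * \sum_r `|W r w|.
    rewrite /pre /preact; apply: (le_trans (ler_normD _ _)); apply: lerD => //.
    apply: (le_trans (ler_norm_sum _ _ _)); rewrite mulr_sumr.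
    apply: ler_sum => r _; rewrite normrM mulrC.
    by apply: ler_wpM2r => //; exact: xle.
  have sW : 0 <= \sum_r `|W r w| by apply: sumr_ge0 => r _.
  have sH : 0 <= \sum_h `|Wh h w| by apply: sumr_ge0 => r _.
  have nb : 0 <= `|b w| by [].
  have h2 : 1 + `|pre| <= X * Qw w.
    rewrite Qdec; nra.
  have h3 : `|Wh h w| <= Qw w.
    rewrite Qdec; apply: (le_trans (@single_le_sum _ _ (fun h => `|Wh h w|) h _)) => //.
    lra.
  have Q0 : 0 <= Qw w by apply: sumr_ge0 => j _.
  have hF : `|F_h1 CW sigma sigma' (s h) (Wh h w) (b w) (fun r => W r w) (x a)|
      <= Num.sqrt CW * M * X * Qw w ^+ 2.
    rewrite /F_h1 -/pre -mulrA normrM (normrM (Num.sqrt CW)) ger0_norm ?sqrtr_ge0 //.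
    apply: (@le_trans _ _ (Num.sqrt CW * Qw w * (M * (X * Qw w)))).
      rewrite -!mulrA; apply: ler_wpM2l; first exact: sqrtr_ge0.
      apply: ler_pM => //.
      apply: (le_trans h1); apply: ler_wpM2l => //; exact: ltW.
    by rewrite le_eqVlt; apply/orP; left; apply/eqP; ring.
  apply: (le_trans (ler_norm _)); rewrite normrM.
  apply: (le_trans (ler_pM (normr_ge0 _) (normr_ge0 _) (ltW (Htheta a h)) hF)).
  by rewrite !mulrA.
have bound1 w : Ew w <= eps * C0 * Qw w ^+ 2.
  apply: (@le_trans _ _ (\sum_(a : A) \sum_(h < n2) (eps * (Num.sqrt CW * M * X) * Qw w ^+ 2))).
    by apply: ler_sum => a _; apply: ler_sum => h _; exact: term.
  rewrite !sumr_const card_ord /C0 -mulr_natl -mulr_natl.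
  by rewrite le_eqVlt; apply/orP; left; apply/eqP; ring.
have bound2 w : expR (Ew w) <= \sum_(j : Jt) expR ((eps * K) * Yv j w ^+ 2).
  apply: (le_trans (y := expR (eps * C0 * (m ^+ 2 * \sum_(j : Jt) Yv j w ^+ 2)))).
    rewrite ler_expR; apply: (le_trans (bound1 w)); apply: ler_wpM2l.
      by rewrite mulr_ge0 // ltW.
    have -> : \sum_(j : Jt) Yv j w ^+ 2 = \sum_(j : Jt) `|Yv j w| ^+ 2.
      by apply: eq_bigr => j _; rewrite real_normK ?num_real.
    exact: (@L_sq _ Jt (fun j => `|Yv j w|) (fun j => normr_ge0 _)).
  rewrite mulrA mulr_sumr.
  apply: (le_trans (@L_exp _ Jt (inl (inl ord0)) (fun j => eps * C0 * m ^+ 2 * Yv j w ^+ 2))).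
  apply: ler_sum => j _; rewrite ler_expR -/m /K.
  by rewrite (ring_aux _ m eps C0 (Yv j w ^+ 2)).
have mYv j : measurable_fun setT (Yv j).
  by case: j => [[i|i]|[r|h]] //=.
have mEw : measurable_fun setT Ew.
  apply: measurable_sum => a; apply: measurable_sum => h.
  apply: measurable_funM => //; rewrite /F_h1.
  apply: measurable_funM; last exact: measurable_funX.
  apply: measurable_funM; first exact: measurable_funM.
  apply: measurableT_comp; first by rewrite /sigma_s; case: (s h).
  rewrite /preact; apply: measurable_funD => //.
  by apply: measurable_sum => r; apply: measurable_funM.
have mexpE : measurable_fun setT (fun w => (expR (Ew w))%:E).
  by apply/measurable_EFinP; apply: measurableT_comp.
have sv v : 0 <= v -> v <= V -> (eps * K) * v <= 4^-1.
  move=> v0 vV; apply: (le_trans (y := eps * K * V)).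
    by apply: ler_wpM2l => //; rewrite mulr_ge0 // ltW.
  have KV0 : 0 <= K * V by rewrite mulr_ge0 // ltW.
  rewrite /eps -mulrA mulrC ler_pdivrMr; last by rewrite mulr_gt0 // ltr_wpDl.
  rewrite mulrA mulVf // mul1r; lra.
have s0 : 0 <= eps * K by rewrite mulr_ge0 // ltW.
have fin : (\int[P]_w (expR (Ew w))%:E < +oo)%E.
  apply: (@le_lt_trans _ _ (\int[P]_w (\sum_(j : Jt) expR ((eps * K) * Yv j w ^+ 2))%:E)%E).
    apply: (ge0_le_integral P measurableT).
    - by move=> w _; rewrite lee_fin expR_ge0.
    - exact: mexpE.
    - apply/measurable_EFinP; apply: measurable_sum => j.
      apply: measurableT_comp => //; apply: measurable_funM => //.
      exact: measurable_funX.
    - by move=> w _; rewrite lee_fin.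
  rewrite (eq_integral (fun w => \sum_(j : Jt) (expR ((eps * K) * Yv j w ^+ 2))%:E)%E);
    last by move=> w _; rewrite sumEFin.
  rewrite ge0_integral_sum //; last first.
    move=> j; apply/measurable_EFinP; apply: measurableT_comp => //.
    by apply: measurable_funM => //; exact: measurable_funX.
  apply: lte_sum_pinfty => j _.
  case: j => [[i|i]|[r|h]] /=.
  - rewrite integral_cst //; apply: (@le_lt_trans _ _ (expR (eps * K * 1 ^+ 2))%:E); last exact: ltry.
    rewrite -[leRHS]mule1; apply: lee_wpmul2l; first by rewrite lee_fin expR_ge0.
    exact: probability_le1.
  - apply: (@gauss_moment _ _ _ P _ _ _ Hb HCb s0); apply: sv => //; rewrite /V; lra.
  - have v0 : 0 <= CW / n0.+1%:R by rewrite divr_ge0 // ltW.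
    apply: (@gauss_moment _ _ _ P _ _ _ (HW r) v0 s0); apply: sv => //.
    rewrite /V; apply: (le_trans (y := CW)); last lra.
    by rewrite ler_pdivrMr // ler_peMr ?(ltW HCW) // ler1n.
  - apply: (@gauss_moment _ _ _ P _ _ _ (HWh h) ler01 s0); apply: sv => //; rewrite /V; lra.
have pos : (0 < \int[P]_w (expR (Ew w))%:E)%E.
  rewrite lt_def integral_ge0 ?andbT; last by move=> w _; rewrite lee_fin expR_ge0.
  apply/negP => /eqP H0.
  have H1 : (\int[P]_w `|(expR (Ew w))%:E|)%E = 0.
    transitivity (\int[P]_w (expR (Ew w))%:E)%E; last exact: H0.
    apply: eq_integral => w _; rewrite gee0_abs // lee_fin expR_ge0.
  have [N [mN PN0 HN]] := (ae_eq_integral_abs P measurableT mexpE).1 H1.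
  have TN : [set: T] `<=` N.
    move=> w _; apply: HN => /(_ Logic.I) /eqP.
    by rewrite /= eqe gt_eqF ?expR_gt0.
  have NT : N = setT by apply/seteqP; split.
  move: PN0; rewrite NT => h0.
  have : (1 = 0 :> \bar R)%E by rewrite -h0; exact: (esym (probability_setT P)).
  by move/eqP; rewrite eqe oner_eq0.
rewrite EI; move: fin pos; case: (\int[P]_w (expR (Ew w))%:E)%E => [r||] //= _ r0.
by rewrite lte_fin in r0; rewrite r0.
Qed.
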